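(* Let $M$ be a strongly regular sequence, $\Omega\subset\mathbb{R}^n$ open, and let $\varphi$ be a non-zero element of $\mathcal{C}_M(\Omega)$ with zero set $X$. Assume that $\varphi$ satisfies the $\mathcal{C}_M$ Łojasiewicz condition, and let $X_\infty=\{a\in X : T_a\varphi=0\}$ be the set of points of flatness of $\varphi$. Then $X\setminus X_\infty$ is dense in the boundary $\partial X$ of $X$.
   Context: Multi-index notation: $J=(j_1,\dots,j_n)$, $j=j_1+\dots+j_n$, $J!=j_1!\cdots j_n!$, $D^J=\partial^j/\partial x_1^{j_1}\cdots\partial x_n^{j_n}$. $T_a\varphi=\sum_J \frac{1}{J!}D^J\varphi(a)x^J$ is the formal Taylor series at $a$. A sequence $M=(M_j)_{j\ge0}$ of reals is strongly regular if: $M$ is increasing with $M_0=1$; $M_{j+1}/M_j$ is increasing; there is $A>0$ with $M_{j+k}\le A^{j+k}M_jM_k$ for all $j,k$; and there is $A>0$ with $\sum_{j\ge k}\frac{M_j}{(j+1)M_{j+1}}\le A\frac{M_k}{M_{k+1}}$ for all $k$. $h_M(t)=\inf_{j\ge0}t^jM_j$ for $t>0$, $h_M(0)=0$. $\mathcal{C}_M(\Omega)$ is the space of $f\in\mathcal{C}^\infty(\Omega)$ such that for every compact $K\subset\Omega$ there are $C,\sigma>0$ with $\vert D^Jf(x)\vert\le C\sigma^j j!M_j$ for all $J$, $x\in K$. A non-zero $\varphi\in\mathcal{C}_M(\Omega)$ with zero set $X$ satisfies the $\mathcal{C}_M$ Łojasiewicz condition if for every compact $K\subset\Omega$ and every real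 $\lambda>0$ there exist $C,\sigma>0$ such that for all $J\in\mathbb{N}^n$ and all $x\in K\setminus X$, $\vert D^J(1/\varphi)(x)\vert\le \dfrac{C\sigma^j j!M_j}{h_M(\lambda\,\mathrm{dist}(x,X))}$. *)

(* Defs.v *)
From HB Require Import structures.
From mathcomp Require Import all_boot all_order all_algebra.
From mathcomp Require Import all_classical all_reals all_analysis.
Set Implicit Arguments. Unset Strict Implicit. Unset Printing Implicit Defensive.
Import Order.TTheory GRing.Theory Num.Theory.
Import numFieldNormedType.Exports.
Local Open Scope classical_set_scope.
Local Open Scope ring_scope.

Section Defs.
Variables (R : realType) (n : nat).
Notation V := 'rV[R]_n.

Definition evec (i : 'I_n) : V := delta_mx 0 i.

Definition partial (i : 'I_n) (f : V -> R) : V -> R :=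
  fun x => 'D_(evec i) f x.

Definition Dseq (s : seq 'I_n) (f : V -> R) : V -> R :=
  foldr partial f s.

Definition mindex := 'I_n -> nat.
Definition mdeg (J : mindex) : nat := (\sum_(i < n) J i)%N.
Definition mfact (J : mindex) : nat := (\prod_(i < n) (J i)`!)%N.

Definition DJ (J : mindex) (f : V -> R) : V -> R :=
  foldr (fun i g => iter (J i) (partial i) g) f (enum 'I_n).

Definition smooth_on (Omega : set V) (f : V -> R) : Prop :=
  forall (s : seq 'I_n) (x : V), Omega x ->
    (forall i : 'I_n, derivable (Dseq s f) x (evec i)) /\
    {for x, continuous (Dseq s f)}.

(** formal Taylor series of f at a, as its family of coefficients *)
Definition taylor (f : V -> R) (a : V) : mindex -> R :=
  fun J => DJ J f a / (mfact J)%:R.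

Definition enorm (x : V) : R := Num.sqrt (\sum_(i < n) x ord0 i ^+ 2).
Definition dist_set (x : V) (X : set V) : R :=
  inf [set enorm (x - y) | y in X].

Definition zero_set (Omega : set V) (phi : V -> R) : set V :=
  [set x | Omega x /\ phi x = 0].

Definition flat_points (Omega : set V) (phi : V -> R) : set V :=
  [set a | zero_set Omega phi a /\ taylor phi a = (fun _ => 0)].

Definition rel_boundary (Omega X : set V) : set V :=
  Omega `&` closure X `&` closure (Omega `\` X).
End Defs.

Section Seq.
Variable R : realType.

Definition strongly_regular (M : nat -> R) : Prop :=
  [/\ (forall j, M j <= M j.+1) /\ M 0%N = 1,
      (forall j, M j.+1 / M j <= M j.+2 / M j.+1),
      (exists2 A : R, 0 < A & forall j k : nat,
          M (j + k)%N <= A ^+ (j + k) * M j * M k) &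
      (exists2 A : R, 0 < A & forall k : nat,
          (\sum_(k <= j <oo) ((M j / ((j.+1)%:R * M j.+1))%:E)
             <= (A * (M k / M k.+1))%:E)%E)].

Definition hM (M : nat -> R) (t : R) : R :=
  if t == 0 then 0 else inf [set t ^+ j * M j | j in [set: nat]].
End Seq.

Section Classes.
Variables (R : realType) (n : nat).
Notation V := 'rV[R]_n.

Definition CM (M : nat -> R) (Omega : set V) (f : V -> R) : Prop :=
  smooth_on Omega f /\
  forall K : set V, compact K -> K `<=` Omega ->
    exists C sigma : R, [/\ 0 < C, 0 < sigma &
      forall (J : mindex n) (x : V), K x ->
        `|DJ J f x| <= C * sigma ^+ mdeg J * (mdeg J)`!%:R * M (mdeg J)].

Definition CM_lojasiewicz (M : nat -> R) (Omega : set V) (phi : V -> R) : Prop :=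
  forall K : set V, compact K -> K `<=` Omega ->
  forall lambda : R, 0 < lambda ->
    exists C sigma : R, [/\ 0 < C, 0 < sigma &
      forall (J : mindex n) (x : V), K x -> ~ zero_set Omega phi x ->
        `|DJ J (fun y => (phi y)^-1) x|
          <= C * sigma ^+ mdeg J * (mdeg J)`!%:R * M (mdeg J)
             / hM M (lambda * dist_set x (zero_set Omega phi))].
End Classes.

(* Main.v *)
Require Import Defs.
From HB Require Import structures.
From mathcomp Require Import all_boot all_order all_algebra.
From mathcomp Require Import all_classical all_reals all_analysis.
Import Order.TTheory GRing.Theory Num.Theory.
Import numFieldNormedType.Exports.
Local Open Scope classical_set_scope.
Local Open Scope ring_scope.
From mathcomp Require Import lra ring.
Set Implicit Arguments. Unset Strict Implicit. Unset Printing Implicit Defensive.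

Lemma mono_derive (R : realType) (c : R) (a : nat) (u : R) :
  is_derive u 1 (fun u => c * u ^+ a.+1 / (a.+1)`!%:R) (c * u ^+ a / a`!%:R).
Proof.
have H := is_deriveZ (c / (a.+1)`!%:R) (is_deriveX a.+1 (is_derive_id u 1)).
have E : (c / (a.+1)`!%:R) \*: (@idfun R ^+ a.+1) = (fun u => c * u ^+ a.+1 / (a.+1)`!%:R).
  apply/funext => v /=. rewrite /GRing.scale /=. 
  have -> : (@idfun R ^+ a.+1) v = v ^+ a.+1.
    elim: a.+1 => [|k IH]; first by []. by rewrite exprS [in RHS]exprS -IH.
  by rewrite mulrAC.
rewrite -E. apply: is_derive_eq.
rewrite /= /GRing.scale /= mulr1 factS natrM.
have h1 : (a`!%:R : R) != 0 by rewrite pnatr_eq0 -lt0n fact_gt0.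
have h2 : (a.+1%:R : R) != 0 by rewrite pnatr_eq0.
field. by rewrite h1 addrC -(natrD _ a 1) addn1 h2.
Qed.

Lemma taylor_pos (R : realType) (r : nat) : forall (g : nat -> R -> R) (T L : R),
 0 <= T ->
 (forall a s, (a < r)%N -> 0 <= s <= T -> is_derive s 1 (g a) (g a.+1 s)) ->
 (forall s, 0 <= s <= T -> `|g r s| <= L) ->
 `|g 0%N T| <= \sum_(a < r) `|g a 0| * T^+a / a`!%:R + L * T^+r / r`!%:R.
Proof.
elim: r => [|r IH] g T L T0 Hd HL.
  by rewrite big_ord0 add0r expr0 mulr1 divr1; apply: HL; rewrite T0 lexx.
pose q (u : R) : R := \sum_(a < r) `|g a.+1 0| * u^+a / a`!%:R + L * u^+r / r`!%:R.
pose Q (u : R) : R := \sum_(a < r) `|g a.+1 0| * u^+a.+1 / (a.+1)`!%:R + L * u^+r.+1 / (r.+1)`!%:R.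
have Hq : forall u, 0 <= u <= T -> `|g 1%N u| <= q u.
  move=> u /andP[u0 uT].
  apply: (IH (fun a => g a.+1) u L u0).
  - by move=> a s ar /andP[s0 su]; apply: Hd => //; rewrite s0 (le_trans su uT).
  - by move=> s /andP[s0 su]; apply: HL; rewrite s0 (le_trans su uT).
have HQ : forall u : R, is_derive u 1 Q (q u).
  move=> u.
  have -> : Q = (\sum_(a < r) (fun u => `|g a.+1 0| * u^+a.+1 / (a.+1)`!%:R))
       + (fun u => L * u^+r.+1 / (r.+1)`!%:R).
    by apply/funext => v; rewrite /Q /= fct_sumE.
  rewrite /q. apply: is_deriveD; last exact: mono_derive.
  apply: is_derive_sum => a; exact: mono_derive.
have Q0 : Q 0 = 0.
  rewrite /Q big1 ?add0r; first by rewrite expr0n /= mulr0 mul0r.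
  by move=> a _; rewrite expr0n /= mulr0 mul0r.
have mono : forall (f : R -> R), (forall u, 0 <= u <= T -> is_derive u 1 f (q u - g 1%N u))
   \/ (forall u, 0 <= u <= T -> is_derive u 1 f (q u + g 1%N u)) -> f 0 <= f T.
  move=> f Hf.
  have Hf' : forall u, 0 <= u <= T -> derivable f u 1 /\ 0 <= derive1 f u.
    move=> u uT; rewrite derive1E.
    case: Hf => Hf; have [d v] := Hf u uT; split => //; rewrite v;
      have := Hq u uT; rewrite ler_norml => /andP[]; lra.
  apply: (@ger0_derive1_ndecr _ f 0 T) => //.
  - by move=> x; rewrite in_itv /= => /andP[x0 xT]; apply: (Hf' x _).1; rewrite !ltW.
  - by move=> x; rewrite in_itv /= => /andP[x0 xT]; apply: (Hf' x _).2; rewrite !ltW.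
  - apply: derivable_within_continuous => x; rewrite in_itv /= => xT.
    exact: (Hf' x xT).1.
have H1 := mono (fun u => Q u - g 0%N u).
have H2 := mono (fun u => Q u + g 0%N u).
have D0 : forall u, 0 <= u <= T -> is_derive u 1 (g 0%N) (g 1%N u).
  by move=> u uT; apply: Hd.
have {}H1 : Q 0 - g 0%N 0 <= Q T - g 0%N T.
  apply: H1; left => u uT. 
  have := is_deriveB (HQ u) (D0 u uT). by [].
have {}H2 : Q 0 + g 0%N 0 <= Q T + g 0%N T.
  apply: H2; right => u uT.
  have := is_deriveD (HQ u) (D0 u uT). by [].
have -> : \sum_(a < r.+1) `|g a 0| * T ^+ a / a`!%:R + L * T ^+ r.+1 / (r.+1)`!%:R
   = `|g 0%N 0| + Q T.
  rewrite big_ord_recl /= expr0 mulr1 divr1 /Q addrA; congr (_ + _ + _).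
rewrite Q0 in H1 H2.
have : `|g 0%N 0| >= g 0%N 0 by rewrite ler_norm.
have : `|g 0%N 0| >= - g 0%N 0 by rewrite -normrN ler_norm.
rewrite ler_norml. lra.
Qed.

Lemma taylor1 (R : realType) (r : nat) (g : nat -> R -> R) (t L : R) :
 (forall a s, (a < r)%N -> Num.min 0 t <= s <= Num.max 0 t ->
     is_derive s 1 (g a) (g a.+1 s)) ->
 (forall s, Num.min 0 t <= s <= Num.max 0 t -> `|g r s| <= L) ->
 `|g 0%N t| <= \sum_(a < r) `|g a 0| * `|t|^+a / a`!%:R + L * `|t|^+r / r`!%:R.
Proof.
move=> Hd HL.
have [t0|t0] := leP 0 t.
  have mn : Num.min 0 t = 0 by rewrite /Num.min; case: ifP => //; lra.
  have mx : Num.max 0 t = t by rewrite /Num.max; case: ifP => //; lra.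
  rewrite (ger0_norm t0); apply: taylor_pos => //.
    by move=> a s ar st; apply: Hd; rewrite ?mn ?mx.
  by move=> s st; apply: HL; rewrite ?mn ?mx.
have mn : Num.min 0 t = t by rewrite /Num.min; case: ifP => //; lra.
have mx : Num.max 0 t = 0 by rewrite /Num.max; case: ifP => //; lra.
pose h a (s : R) : R := (-1) ^+ a * g a (- s).
have E : forall a, `|h a 0| = `|g a 0| by move=> a; rewrite /h oppr0 normrM normrX normrN1 expr1n mul1r.
have := @taylor_pos R r h (- t) L.
rewrite /h expr0 mul1r opprK.
under eq_bigr do rewrite E.
rewrite (ltr0_norm t0); apply; first lra.
  move=> a s ar /andP[s0 st].
  have D1 : is_derive (- s) 1 (g a) (g a.+1 (- s)) by apply: Hd => //; rewrite mn mx; apply/andP; split; lra.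
  have D2 := is_derive1_comp D1 (is_deriveNid s 1).
  have D3 := is_deriveZ ((-1) ^+ a) D2.
  apply: is_derive_eq.
  rewrite /GRing.scale /= exprS. lra.
move=> s /andP[s0 st].
rewrite normrM normrX normrN1 expr1n mul1r; apply: HL; rewrite mn mx; apply/andP; split; lra.
Qed.

Lemma axis_derive (R : realType) (n : nat) (F : 'rV[R]_n -> R) (p : 'rV[R]_n) (i : 'I_n) (s : R) :
  derivable F (p + s *: evec R i) (evec R i) ->
  is_derive s 1 (fun s => F (p + s *: evec R i)) (partial i F (p + s *: evec R i)).
Proof.
move=> dF.
have E : (fun h : R => h^-1 *: (((fun s => F (p + s *: evec R i)) \o shift s) (h *: 1) - F (p + s *: evec R i)))
  = (fun h : R => h^-1 *: ((F \o shift (p + s *: evec R i)) (h *: evec R i) - F (p + s *: evec R i))).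
  apply/funext => h /=; congr (_ *: (F _ - _)).
  have -> : (h%:A : R) = h by rewrite /GRing.scale/= mulr1.
  by rewrite scalerDl addrCA.
apply: DeriveDef; first by rewrite /derivable E.
by rewrite /partial /derive E.
Qed.

Definition Ja (n : nat) (J : mindex n) (i : 'I_n) (a : nat) : mindex n :=
  fun l => if l == i then a else J l.

Lemma foldr_Ja (R : realType) (n : nat) (J : mindex n) (i : 'I_n) (a : nat) (f : 'rV[R]_n -> R)
  (s : seq 'I_n) :
  (forall l : 'I_n, (l <= i)%N -> J l = 0%N) ->
  sorted (relpre val ltn) s ->
  foldr (fun l g => iter (Ja J i a l) (partial l) g) f s =
  if i \in s then iter a (partial i) (foldr (fun l g => iter (J l) (partial l) g) f s)
  else foldr (fun l g => iter (J l) (partial l) g) f s.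
Proof.
move=> J0; elim: s => [|l s IH] //= Hs.
have tr : transitive (relpre (nat_of_ord (n:=n)) ltn).
  by move=> y x z /= ; apply: ltn_trans.
move: Hs; rewrite (path_sortedE tr) => /andP[Hall Hs].
rewrite in_cons IH //.
have [li|li|li] := ltngtP l i.
- have lNi : (l == i) = false by apply/negbTE; apply/eqP => E; move: li; rewrite E ltnn.
  have iNl : (i == l) = false by rewrite eq_sym.
  have Jl : J l = 0%N by apply: J0; exact: ltnW.
  have Jal : Ja J i a l = 0%N by rewrite /Ja lNi.
  by rewrite iNl Jal Jl.
- have lNi : (l == i) = false by apply/negbTE; apply/eqP => E; move: li; rewrite E ltnn.
  have iNl : (i == l) = false by rewrite eq_sym.
  have iNs : i \notin s.
    apply/negP => ins; have := allP Hall i ins; rewrite /= ltnNge ltnW //.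
  have Jal : Ja J i a l = J l by rewrite /Ja lNi.
  by rewrite iNl (negbTE iNs) Jal.
- have E : l = i by apply: val_inj.
  subst l.
  have iNs : i \notin s by apply/negP => ins; have := allP Hall i ins; rewrite /= ltnn.
  rewrite (negbTE iNs) eqxx /= /Ja eqxx J0 //.
Qed.

Lemma DJ_Ja (R : realType) (n : nat) (J : mindex n) (i : 'I_n) (a : nat) (f : 'rV[R]_n -> R) :
  (forall l : 'I_n, (l <= i)%N -> J l = 0%N) ->
  DJ (Ja J i a) f = iter a (partial i) (DJ J f).
Proof.
move=> J0; rewrite /DJ foldr_Ja // ?mem_enum //.
by have := iota_ltn_sorted 0 n; rewrite -val_enum_ord sorted_map.
Qed.

Lemma DJ_Dseq (R : realType) (n : nat) (J : mindex n) (f : 'rV[R]_n -> R) :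
  exists s, DJ J f = Dseq s f.
Proof.
rewrite /DJ /Dseq; elim: (enum 'I_n) => [|l e [s IH]] /=; first by exists [::].
exists (nseq (J l) l ++ s); rewrite foldr_cat IH.
by elim: (J l) => [|k IHk] //=; rewrite IHk.
Qed.

Lemma mdeg_Ja (n : nat) (J : mindex n) (i : 'I_n) (a : nat) :
  J i = 0%N -> mdeg (Ja J i a) = (mdeg J + a)%N.
Proof.
move=> Ji; rewrite /mdeg (bigD1 i) //= [in RHS](bigD1 i) //= Ji /Ja eqxx add0n addnC.
congr (_ + _)%N; apply: eq_bigr => l /negbTE ->; done.
Qed.

Lemma binom_fact (R : realType) (u v : R) (r : nat) :
  \sum_(a < r.+1) u^+(r-a) * v^+a / ((r-a)`!%:R * a`!%:R) = (u+v)^+r / r`!%:R.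
Proof.
rewrite exprDn mulr_suml; apply: eq_bigr => a _.
have ar : (a <= r)%N by rewrite -ltnS.
have := bin_fact ar => /(congr1 (fun m => m%:R : R)); rewrite !natrM => E.
have h1 : (a`!%:R : R) != 0 by rewrite pnatr_eq0 -lt0n fact_gt0.
have h2 : ((r - a)`!%:R : R) != 0 by rewrite pnatr_eq0 -lt0n fact_gt0.
have h3 : (r`!%:R : R) != 0 by rewrite pnatr_eq0 -lt0n fact_gt0.
rewrite -mulr_natr -E; field.
by rewrite h1 h2 pnatr_eq0 -lt0n bin_gt0.
Qed.

Definition pt (R : realType) (n : nat) (b x : 'rV[R]_n) (m : nat) : 'rV[R]_n :=
  \row_l (if (l < m)%N then x ord0 l else b ord0 l).

Lemma pt_entry (R : realType) (n : nat) (b x : 'rV[R]_n) (m : nat) (i : 'I_n) (s : R) (l : 'I_n) :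
  val i = m ->
  (pt b x m + s *: evec R i) ord0 l =
  if (l < m)%N then x ord0 l else if l == i then b ord0 l + s else b ord0 l.
Proof.
move=> im; rewrite !mxE eqxx /=.
case: ifP => lm.
  have -> : (l == i) = false by apply/negbTE/eqP => E; move: lm; rewrite E im ltnn.
  by rewrite mulr0 addr0.
by case: eqP => _; rewrite ?mulr1 ?mulr0 ?addr0.
Qed.

Lemma pt_step (R : realType) (n : nat) (b x : 'rV[R]_n) (m : nat) (i : 'I_n) :
  val i = m ->
  pt b x m.+1 = pt b x m + (x ord0 i - b ord0 i) *: evec R i.
Proof.
move=> im; apply/rowP => l; rewrite (@pt_entry _ _ b x m i (x ord0 i - b ord0 i) l im) mxE ltnS leq_eqVlt.
case: (ltnP l m) => lm; first by rewrite orbT.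
rewrite orbF.
case: eqP => [E|NE].
  have -> : l = i by apply: val_inj; rewrite im; exact: E.
  by rewrite eqxx addrCA subrr addr0.
have -> : (l == i) = false by apply/negbTE/eqP => E; apply: NE; rewrite E im.
done.
Qed.

Lemma pt0 (R : realType) (n : nat) (b x : 'rV[R]_n) : pt b x 0 = b.
Proof. by apply/rowP => l; rewrite mxE. Qed.

Lemma ptn (R : realType) (n : nat) (b x : 'rV[R]_n) : pt b x n = x.
Proof. by apply/rowP => l; rewrite mxE ltn_ord. Qed.

Lemma minmax_l (R : realType) (a c : R) : Num.min a c <= a <= Num.max a c.
Proof. by rewrite ge_min le_max lexx. Qed.

Lemma minmax_r (R : realType) (a c : R) : Num.min a c <= c <= Num.max a c.
Proof. by rewrite ge_min le_max lexx !orbT. Qed.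

Lemma minmax_seg (R : realType) (a c s : R) :
  Num.min 0 (c - a) <= s <= Num.max 0 (c - a) -> Num.min a c <= a + s <= Num.max a c.
Proof.
rewrite /Num.min /Num.max; have [h|h] := ltP 0 (c - a); have [h'|h'] := ltP a c;
  move=> /andP[H1 H2]; apply/andP; split; lra.
Qed.

Lemma DJ0 (R : realType) (n : nat) (f : 'rV[R]_n -> R) : DJ (fun _ => 0%N) f = f.
Proof. by rewrite /DJ; elim: (enum 'I_n) => //= l e ->. Qed.

Lemma mdeg0 (n : nat) : mdeg (fun _ : 'I_n => 0%N) = 0%N.
Proof. by rewrite /mdeg big1. Qed.

Lemma multi_taylor (R : realType) (n : nat) (Omega K : set 'rV[R]_n) (phi : 'rV[R]_n -> R)
  (Ck : R) (k : nat) (b x : 'rV[R]_n) (D : R) :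
  smooth_on Omega phi -> K `<=` Omega ->
  (forall (J : mindex n) y, K y -> mdeg J = k -> `|DJ J phi y| <= Ck) ->
  (forall J : mindex n, DJ J phi b = 0) ->
  (forall v : 'rV[R]_n, (forall l, Num.min (b ord0 l) (x ord0 l) <= v ord0 l <= Num.max (b ord0 l) (x ord0 l)) -> K v) ->
  0 <= D -> (forall l, `|x ord0 l - b ord0 l| <= D) -> 0 <= Ck ->
  `|phi x| <= Ck * (n%:R * D)^+k / k`!%:R.
Proof.
move=> Hs KO HD Hb HK D0 HxD Ck0.
have fpos : forall j : nat, (0 : R) < j`!%:R by move=> j; rewrite ltr0n fact_gt0.
have S : forall m, (m <= n)%N -> forall J : mindex n, (forall l : 'I_n, (l < m)%N -> J l = 0%N) ->
   (mdeg J <= k)%N ->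
   `|DJ J phi (pt b x m)| <= Ck * (m%:R * D)^+(k - mdeg J) / (k - mdeg J)`!%:R.
  elim => [_ J _ _|m IH mn J HJ Hk].
    rewrite pt0 Hb normr0; apply: divr_ge0; last exact: ltW.
    by apply: mulr_ge0 => //; apply: exprn_ge0; rewrite mul0r.
  pose i := Ordinal mn.
  have im : val i = m by [].
  have J0 : forall l : 'I_n, (l <= i)%N -> J l = 0%N by move=> l li; apply: HJ; rewrite ltnS.
  have Ji : J i = 0%N by apply: J0.
  set j := mdeg J; set r := (k - j)%N.
  pose t := x ord0 i - b ord0 i.
  pose g a (s : R) : R := DJ (Ja J i a) phi (pt b x m + s *: evec R i).
  have seg_in : forall s, Num.min 0 t <= s <= Num.max 0 t -> K (pt b x m + s *: evec R i).
    move=> s hs; apply: HK => l; rewrite (@pt_entry _ _ b x m i s l im).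
    case: ifP => _; first exact: minmax_r.
    case: eqP => [->|_]; last exact: minmax_l.
    exact: minmax_seg.
  have T1 := @taylor1 R r g t Ck.
  have {T1} T1 : `|g 0%N t| <= \sum_(a < r) `|g a 0| * `|t|^+a / a`!%:R + Ck * `|t|^+r / r`!%:R.
    apply: T1.
      move=> a s ar hs; rewrite /g.
      have -> : DJ (Ja J i a.+1) phi = partial i (DJ (Ja J i a) phi) by rewrite !DJ_Ja.
      apply: axis_derive.
      have [sq ->] := DJ_Dseq (Ja J i a) phi.
      exact: (Hs sq _ (KO _ (seg_in s hs))).1.
    move=> s hs; apply: HD; first exact: seg_in.
    by rewrite mdeg_Ja // subnKC.
  have Eg0 : g 0%N t = DJ J phi (pt b x m.+1).
    rewrite /g (pt_step b x im); congr (DJ _ _ _).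
    by apply/funext => l; rewrite /Ja; case: eqP => // ->.
  rewrite -Eg0; apply: (le_trans T1).
  have Ega : forall a, (a < r)%N -> `|g a 0| <= Ck * (m%:R * D)^+(r - a) / (r - a)`!%:R.
    move=> a ar; rewrite /g scale0r addr0.
    have -> : (r - a = k - mdeg (Ja J i a))%N by rewrite mdeg_Ja // subnDA.
    apply: IH; first exact: ltnW.
      move=> l lm; rewrite /Ja; case: eqP => [E|_]; first by move: lm; rewrite E im ltnn.
      by apply: HJ; rewrite ltnS ltnW.
    by rewrite mdeg_Ja // -leq_subRL // ltnW.
  have tD : `|t| <= D by apply: HxD.
  have powle : forall a, `|t|^+a <= D^+a.
    by move=> a; apply: lerXn2r; rewrite ?nnegrE //.
  have step1 : \sum_(a < r) `|g a 0| * `|t|^+a / a`!%:R + Ck * `|t|^+r / r`!%:R <=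
     \sum_(a < r) Ck * (m%:R * D)^+(r - a) / (r - a)`!%:R * D^+a / a`!%:R + Ck * D^+r / r`!%:R.
    have e1 : forall u v w : R, u * v / w = u * (v / w) by move=> *; rewrite mulrA.
    apply: lerD.
      apply: ler_sum => a _.
      rewrite (e1 `|g a 0|) (e1 (Ck * _ / _)).
      apply: ler_pM.
      + by [].
      + by apply: mulr_ge0; [apply: exprn_ge0|apply: ltW; rewrite invr_gt0].
      + exact: Ega (ltn_ord a).
      + by rewrite ler_pM2r ?invr_gt0.
    rewrite (e1 Ck) (e1 Ck); apply: ler_wpM2l => //.
    by rewrite ler_pM2r ?invr_gt0.
  apply: (le_trans step1); rewrite le_eqVlt; apply/orP; left; apply/eqP.
  have -> : (m.+1%:R * D) = m%:R * D + D by rewrite -natr1 mulrDl mul1r.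
  rewrite -[in RHS](mulrA Ck) -binom_fact big_ord_recr /= subnn expr0 mul1r mulrDr mulr_sumr; congr (_ + _).
    apply: eq_bigr => a _; rewrite mulrA. 
    have h1 := fpos a; have h2 := fpos (r - a)%N.
    field; apply/andP; split; apply: lt0r_neq0.
      done. done.
  have h1 := fpos r.
  rewrite /= mul1r; field; apply: lt0r_neq0 => //.
have := S n (leqnn n) (fun _ => 0%N) (fun _ _ => erefl) (ltac:(by rewrite mdeg0)).
by rewrite DJ0 mdeg0 subn0 ptn.
Qed.

Lemma ball_coord (R : realType) n (a y : 'rV[R]_n) (e : R) :
  ball a e y -> forall i, `|a ord0 i - y ord0 i| < e.
Proof.
rewrite mx_norm_ball /ball_ /= /Num.norm /= mx_normrE => H i.
apply: le_lt_trans H.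
have := @le_bigmax _ _ _ 0 (fun ij : 'I_1 * 'I_n => `|(a - y) ij.1 ij.2|) (ord0, i).
by rewrite !mxE.
Qed.

Lemma coord_ball (R : realType) n (a y : 'rV[R]_n) (e : R) :
  0 < e -> (forall i, `|a ord0 i - y ord0 i| < e) -> ball a e y.
Proof.
move=> e0 H; rewrite mx_norm_ball /ball_ /= /Num.norm /= mx_normrE.
apply/bigmax_ltP; split => // -[i j] _ /=.
by rewrite !mxE (ord1 i); apply: H.
Qed.

Lemma enorm_coord (R : realType) n (v : 'rV[R]_n) (i : 'I_n) : `|v ord0 i| <= enorm v.
Proof.
rewrite /enorm -sqrtr_sqr; apply: ler_wsqrtr.
rewrite (bigD1 i) //= lerDl; apply: sumr_ge0 => l _; exact: sqr_ge0.
Qed.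

Lemma enorm_le (R : realType) n (v : 'rV[R]_n) (c : R) :
  0 <= c -> (forall i, `|v ord0 i| <= c) -> enorm v <= n%:R * c.
Proof.
move=> c0 H; rewrite /enorm.
have n0 : (0 : R) <= n%:R by rewrite ler0n.
rewrite -(ger0_norm (mulr_ge0 n0 c0)) -sqrtr_sqr; apply: ler_wsqrtr.
apply: (@le_trans _ _ (\sum_(i < n) c ^+ 2)).
  apply: ler_sum => i _; rewrite -real_normK ?num_real //.
  by apply: lerXn2r; rewrite ?nnegrE ?normr_ge0.
rewrite sumr_const card_ord exprMn -[_ *+ n]mulr_natl; apply: ler_wpM2r; first exact: sqr_ge0.
case: n {v H n0} => [|m]; first by rewrite expr0n.
by rewrite -natrX ler_nat expnS leq_pmulr.
Qed.

Lemma hM_le (R : realType) (M : nat -> R) (t : R) (j : nat) :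
  0 < t -> (forall j, 0 <= M j) -> hM M t <= t^+j * M j.
Proof.
move=> t0 M0; rewrite /hM gt_eqF //; apply: ge_inf; last by exists j.
exists 0 => y [i _ <-]; apply: mulr_ge0 => //; apply: exprn_ge0; exact: ltW.
Qed.

Lemma hM_ge (R : realType) (M : nat -> R) (t c : R) :
  0 < t -> (forall j, c <= t^+j * M j) -> c <= hM M t.
Proof.
move=> t0 H; rewrite /hM gt_eqF //; apply: lb_le_inf.
  by exists (t^+0 * M 0%N); exists 0%N.
by move=> y [i _ <-].
Qed.

Lemma hM_double (R : realType) (M : nat -> R) (N : nat) (s : R) :
  0 < s -> (forall j, 1 <= M j) -> 2^+N * s * M N <= 1 -> 2^+N * hM M s <= hM M (2 * s).
Proof.
move=> s0 M1 HN.
have M0 : forall j, 0 <= M j by move=> j; apply: le_trans (M1 j); exact: ler01.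
have hMs0 : 0 <= hM M s by apply: hM_ge => // j; apply: mulr_ge0 => //; apply: exprn_ge0; exact: ltW.
have two0 : (0 : R) <= 2 ^+ N by apply: exprn_ge0.
have s1 : s <= 1.
  have h1 : 1 <= 2 ^+ N * M N :> R by rewrite -[1]mulr1; apply: ler_pM => //; apply: exprn_ege1; lra.
  have : 2 ^+ N * M N * s <= 1 by rewrite mulrAC.
  nra.
apply: hM_ge; first by rewrite mulr_gt0 // ltr0n.
move=> j; rewrite exprMn -mulrA.
case: (leqP N j) => jN.
  apply: ler_pM => //; first by apply: ler_weXn2l => //; lra.
  exact: hM_le.
apply: (@le_trans _ _ (s ^+ j)).
  apply: (@le_trans _ _ (2 ^+ N * (s ^+ N * M N))).
    by apply: ler_wpM2l => //; apply: hM_le.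
  clear two0; case: N jN HN => // N jN HN.
  have E : 2 ^+ N.+1 * (s ^+ N.+1 * M N.+1) = (2 ^+ N.+1 * s * M N.+1) * s ^+ N.
    rewrite [s ^+ N.+1]exprSr; move: (2 ^+ N.+1 : R) (s ^+ N) (M N.+1) => A P B; ring.
  rewrite E; apply: (@le_trans _ _ (1 * s ^+ N)).
    apply: ler_wpM2r => //; apply: exprn_ge0; exact: ltW.
  rewrite mul1r; apply: ler_wiXn2l => //; exact: ltW.
rewrite -[X in X <= _]mul1r; apply: ler_pM => //; first by apply: exprn_ge0; exact: ltW.
  by apply: exprn_ege1; lra.
rewrite -[X in X <= _]mulr1; apply: ler_pM => //; first by apply: exprn_ge0; exact: ltW.
Qed.

Unset Implicit Arguments.

Lemma box_minmax (R : realType) (lo hi p q v : R) :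
  lo <= p <= hi -> lo <= q <= hi -> Num.min p q <= v <= Num.max p q -> lo <= v <= hi.
Proof.
rewrite /Num.min /Num.max; have [h|h] := ltP p q => /andP[? ?] /andP[? ?] /andP[? ?];
  apply/andP; split; lra.
Qed.

Lemma flat_DJ (R : realType) (n : nat) (Omega : set 'rV[R]_n) (phi : 'rV[R]_n -> R) (b : 'rV[R]_n) :
  flat_points Omega phi b -> forall J, DJ J phi b = 0.
Proof.
move=> [_ H] J; have := congr1 (fun f => f J) H; rewrite /taylor /= => /eqP.
rewrite mulf_eq0 invr_eq0 pnatr_eq0 => /orP[/eqP //|].
move=> /eqP E; exfalso.
have : (0 < mfact J)%N by rewrite /mfact prodn_gt0 // => i; exact: fact_gt0.
by rewrite E.
Qed.

Theorem lemma3p3 (R : realType) (n : nat) (M : nat -> R)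
    (Omega : set 'rV[R]_n) (phi : 'rV[R]_n -> R) :
  strongly_regular M ->
  open Omega ->
  CM M Omega phi ->
  (exists2 x, Omega x & phi x != 0) ->
  CM_lojasiewicz M Omega phi ->
  rel_boundary Omega (zero_set Omega phi)
    `<=` closure (zero_set Omega phi `\` flat_points Omega phi).
Proof.
move=> [[Minc M0] _ _ _] Oo [Hs HCM] _ HL a [[Oa clX] clC].
set X := zero_set Omega phi.
have M1 : forall j, 1 <= M j.
  by elim=> [|j IH]; [rewrite M0 | exact: le_trans IH (Minc j)].
have Mpos : forall j, 0 < M j by move=> j; apply: lt_le_trans (M1 j); exact: ltr01.
move=> B nB.
have [//|Hno] := pselect ((X `\` flat_points Omega phi) `&` B !=set0).
exfalso.
have flatB : forall y, X y -> B y -> flat_points Omega phi y.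
  move=> y Xy By; apply: contrapT => Fy; apply: Hno; exists y; split => //.
have nO : nbhs a Omega by move: Oo; rewrite openE => /(_ a Oa).
have [eps eps0 Hball] := (nbhs_ballP _ _).1 (filterI nB nO).
pose r := eps / 2.
have r0 : 0 < r by rewrite /r divr_gt0.
have reps : r < eps by rewrite /r ltr_pdivrMr ?ltr0n //; rewrite -subr_gt0 mulr_natr mulr2n addrK.
pose K := [set v : 'rV[R]_n | forall i, v ord0 i \in `[a ord0 i - r, a ord0 i + r]].
have Kc : compact K.
  rewrite /K; apply: (@rV_compact _ _ (fun i => `[a ord0 i - r, a ord0 i + r]%classic)).
  by move=> i; apply: segment_compact.
have KBO : K `<=` B `&` Omega.
  move=> v Kv; apply: Hball; apply: coord_ball => // i.
  have := Kv i; rewrite in_itv /= => /andP[h1 h2].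
  rewrite ltr_distlC; apply/andP; split; lra.
have KO : K `<=` Omega by move=> v /KBO [].
have [C [sig [C0 sig0 HC]]] := HCM K Kc KO.
pose lam := 4 * sig * (n.+1)%:R.
have lam0 : 0 < lam by rewrite /lam !mulr_gt0 // ltr0n.
have [C2 [sig2 [C20 sig20 HC2]]] := HL K Kc KO lam lam0.
pose N := Num.Def.archi_bound (C * C2).
have CC2 : C * C2 < 2 ^+ N.
  apply: (lt_le_trans (archi_boundP (ltW (mulr_gt0 C0 C20)))).
  rewrite -/N -natrX ler_nat; exact: ltnW (ltn_expl N (ltnSn 1)).
pose del := Num.min (r / (4 * n%:R + 5)) ((4 * sig * (n.+1)%:R ^+ 2 * 2 ^+ N * M N)^-1).
have n0 : (0 : R) <= n%:R by rewrite ler0n.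
have n5 : (0 : R) < 4 * n%:R + 5 by lra.
have del0 : 0 < del.
  rewrite /del lt_min; apply/andP; split; first exact: divr_gt0.
  by rewrite invr_gt0 !mulr_gt0 ?exprn_gt0 ?ltr0n.
have delr : del * (4 * n%:R + 5) <= r.
  by rewrite -ler_pdivlMr // /del ge_min lexx.
have delM : del * (4 * sig * (n.+1)%:R ^+ 2 * 2 ^+ N * M N) <= 1.
  have P : 0 < 4 * sig * (n.+1)%:R ^+ 2 * 2 ^+ N * M N by rewrite !mulr_gt0 ?exprn_gt0 ?ltr0n.
  by rewrite -ler_pdivlMr // div1r /del ge_min lexx orbT.
have [x [[Ox nXx] bx]] := clC (ball a del) (nbhsx_ballx a del del0).
have [z [Xz bz]] := clX (ball a del) (nbhsx_ballx a del del0).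
have phix : phi x != 0 by apply/eqP => e; apply: nXx; split.
have xa := ball_coord bx.
have za := ball_coord bz.
have delr' : del <= r by nra.
have Kx : K x.
  move=> i; have := xa i; rewrite ltr_distlC in_itv /= => /andP[h1 h2].
  apply/andP; split; lra.
have xz : forall i, `|(x - z) ord0 i| <= 2 * del.
  move=> i; rewrite !mxE; have := xa i; have := za i.
  rewrite !ltr_distlC => /andP[h1 h2] /andP[h3 h4]; rewrite ler_distlC; apply/andP; split; lra.
pose S := [set enorm (x - y) | y in X].
have Sne : S (enorm (x - z)) by exists z.
have Slb : lbound S 0 by move=> _ [y _ <-]; exact: sqrtr_ge0.
have hasinf : has_inf S by split; [exists (enorm (x - z)) | exists 0].
pose d := dist_set x X.
have dE : d = inf S by [].
have d0 : 0 <= d by rewrite dE; apply: lb_le_inf => //; exists (enorm (x - z)).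
have dz : d <= enorm (x - z) by rewrite dE; apply: ge_inf => //; exists 0.
have dz2 : d <= n%:R * (2 * del).
  by apply: (le_trans dz); apply: enorm_le => //; lra.
have Loj := HC2 (fun _ => 0%N) x Kx nXx.
rewrite DJ0 mdeg0 expr0 mulr1 fact0 mulr1 M0 mulr1 -/X -/d in Loj.
have nphix : 0 < `|(phi x)^-1| by rewrite normr_gt0 invr_eq0.
have hpos : 0 < hM M (lam * d).
  have [ld0|ld0] := eqVneq (lam * d) 0.
    by move: Loj; rewrite ld0 /hM eqxx invr0 mulr0 => H; move: nphix; rewrite ltNge H.
  have ldp : 0 < lam * d by rewrite lt_def ld0 mulr_ge0 // ltW.
  have h0 : 0 <= hM M (lam * d).
    apply: hM_ge => // j; apply: mulr_ge0; [apply: exprn_ge0; exact: ltW|exact: ltW].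
  rewrite lt_def h0 andbT; apply/eqP => e; move: Loj; rewrite e invr0 mulr0 => H.
  by move: nphix; rewrite ltNge H.
have dpos : 0 < d.
  rewrite lt_def d0 andbT; apply/eqP => e; move: hpos; rewrite e mulr0 /hM eqxx ltxx.
  done.
have [e [b Xb <-] eb] := inf_adherent dpos hasinf.
rewrite -dE in eb.
have xb : forall l, `|x ord0 l - b ord0 l| <= 2 * d.
  move=> l; have := enorm_coord (x - b) l; rewrite !mxE => h; lra.
have Kb : K b.
  move=> i; have := xa i; have := xb i; rewrite in_itv /= ltr_distlC => h1 /andP[h2 h3].
  rewrite ler_distlC in h1; case/andP: h1 => h1 h4.
  have : 2 * d <= 4 * n%:R * del by nra.
  move=> h5; apply/andP; split; nra.
have flatb := flatB b Xb (KBO b Kb).1.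
pose s0 := sig * (n.+1)%:R * (2 * d).
have s0pos : 0 < s0 by rewrite /s0 !mulr_gt0 ?ltr0n.
have Tk : forall k, `|phi x| <= C * (s0 ^+ k * M k).
  move=> k.
  have MT := @multi_taylor R n Omega K phi (C * sig ^+ k * k`!%:R * M k) k b x (2 * d) Hs KO.
  have Ck0 : 0 <= C * sig ^+ k * k`!%:R * M k.
    by rewrite !mulr_ge0 ?ler0n ?exprn_ge0 // ltW.
  have {MT} MT : `|phi x| <= C * sig ^+ k * k`!%:R * M k * (n%:R * (2 * d)) ^+ k / k`!%:R.
    apply: MT => //.
    - by move=> J y Ky Jk; have := HC J y Ky; rewrite Jk.
    - exact: flat_DJ flatb.
    - move=> v Hv l; have := Kb l; have := Kx l; rewrite !in_itv /= => h1 h2.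
      exact: box_minmax h2 h1 (Hv l).
    - by rewrite mulr_ge0 // ltW.
  apply: (le_trans MT).
  have kf : (k`!%:R : R) != 0 by rewrite pnatr_eq0 -lt0n fact_gt0.
  have -> : C * sig ^+ k * k`!%:R * M k * (n%:R * (2 * d)) ^+ k / k`!%:R
     = C * ((sig * n%:R * (2 * d)) ^+ k * M k).
    rewrite !exprMn; field.
    exact: kf.
  apply: ler_wpM2l; first exact: ltW.
  apply: ler_wpM2r; first exact: ltW (Mpos k).
  apply: lerXn2r.
  - by rewrite nnegrE !mulr_ge0 ?ler0n // ltW.
  - by rewrite nnegrE ltW.
  rewrite /s0; apply: ler_wpM2r; first by rewrite mulr_ge0 // ltW.
  by apply: ler_wpM2l; [exact: ltW|rewrite ler_nat].
have H1 : `|phi x| <= C * hM M s0.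
  rewrite -ler_pdivrMl //; apply: hM_ge => // k; rewrite ler_pdivrMl //; exact: Tk.
have lamd : lam * d = 2 * s0 by rewrite /lam /s0; ring.
rewrite lamd in Loj hpos.
have nn : ((n.+1)%:R : R) = n%:R + 1 by rewrite -natr1.
have s0b : s0 <= 4 * sig * (n.+1)%:R ^+ 2 * del.
  have d2 : 2 * d <= (n%:R + 1) * (4 * del) by lra.
  have -> : 4 * sig * (n.+1)%:R ^+ 2 * del = sig * (n.+1)%:R * ((n%:R + 1) * (4 * del)) by rewrite nn; ring.
  rewrite /s0; apply: ler_wpM2l => //; rewrite mulr_ge0 ?ler0n //; exact: ltW.
have twoN : (0 : R) < 2 ^+ N by apply: exprn_gt0.
have HN : 2 ^+ N * s0 * M N <= 1.
  apply: le_trans delM.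
  have -> : del * (4 * sig * (n.+1)%:R ^+ 2 * 2 ^+ N * M N) = 2 ^+ N * (4 * sig * (n.+1)%:R ^+ 2 * del) * M N by ring.
  apply: ler_wpM2r; first exact: ltW (Mpos N).
  by apply: ler_wpM2l => //; exact: ltW.
have hd := hM_double s0pos M1 HN.
have px : 0 < `|phi x| by rewrite normr_gt0.
have L1 : `|phi x|^-1 * hM M (2 * s0) <= C2.
  have := ler_wpM2r (ltW hpos) Loj.
  by rewrite normrV ?unitfE // divfK // gt_eqF.
have L2 : hM M (2 * s0) <= C2 * `|phi x|.
  have := ler_wpM2l (ltW px) L1.
  by rewrite mulVKf ?gt_eqF // [_ * C2]mulrC.
have L3 : hM M (2 * s0) <= C * C2 * hM M s0.
  apply: (le_trans L2); rewrite mulrC -mulrA [C2 * _]mulrC mulrA.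
  by apply: ler_wpM2r; [exact: ltW|].
move: (hM M s0) (hM M (2 * s0)) hd L3 hpos CC2 => h1 h2 hd L3 h2p CC2'.
have P := mulr_gt0 C0 C20.
nra.
Qed.
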